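(* Let $d\ge2$, $\omega=e^{2\pi\mathrm{i}/d}$, $\omega^x=e^{2\pi\mathrm{i}x/d}$ for real $x$, and $a_k=\frac{1-\mathrm{i}}{2}\omega^{k/4}$ for $k=1,\dots,d-1$. Let $B_1,B_2$ be unitary operators on a finite-dimensional Hilbert space whose eigenvalues lie in $\{\omega^l: l=0,\dots,d-1\}$. Define, for $k=1,\dots,d-1$, $$C_1^{(k)}=a_kB_1^{-k}+a_k^*\omega^kB_2^{-k},\qquad C_2^{(k)}=a_k^*B_1^{-k}+a_kB_2^{-k}.$$ Suppose that for $i=1,2$ and all $k=1,\dots,d-1$: $C_i^{(k)}=\big[C_i^{(1)}\big]^k$ and $C_i^{(d-k)}C_i^{(k)}=\mathbb{1}$. Then for every positive integer $n<d$ dividing $d$, $\operatorname{Tr}(B_1^n)=\operatorname{Tr}(B_2^n)=0$. *)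

(* Defs.v *)
From HB Require Import structures.
From mathcomp Require Import all_boot all_order all_algebra.
From mathcomp Require Import reals.
From mathcomp Require Import complex.
From mathcomp Require Import trigo.
Set Implicit Arguments. Unset Strict Implicit. Unset Printing Implicit Defensive.
Import Order.TTheory GRing.Theory Num.Theory.
Local Open Scope ring_scope.
Local Open Scope complex_scope.

Section Defs.
Variable R : realType.

Definition omega_pow (d : nat) (x : R) : R[i] :=
  (cos (2 * pi * x / d%:R)) +i* (sin (2 * pi * x / d%:R)).

Definition acoef (d k : nat) : R[i] :=
  ((1 - 'i) / 2%:R) * omega_pow d (k%:R / 4%:R).

Definition adjmx (m : nat) (A : 'M[R[i]]_m) : 'M[R[i]]_m := (map_mx conjc A)^T.

Definition unitary_cmx (m : nat) (A : 'M[R[i]]_m) : Prop :=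
  A *m adjmx A = 1%:M /\ adjmx A *m A = 1%:M.

Definition spectrum_in_roots (d m : nat) (B : 'M[R[i]]_m) : Prop :=
  forall lam : R[i], eigenvalue B lam ->
    exists l : nat, (l < d)%N /\ lam = omega_pow d l%:R.

Definition Cop1 (d m k : nat) (B1 B2 : 'M[R[i]]_m) : 'M[R[i]]_m :=
  acoef d k *: (invmx B1) ^+ k
  + ((acoef d k)^* * omega_pow d k%:R) *: (invmx B2) ^+ k.

Definition Cop2 (d m k : nat) (B1 B2 : 'M[R[i]]_m) : 'M[R[i]]_m :=
  (acoef d k)^* *: (invmx B1) ^+ k + acoef d k *: (invmx B2) ^+ k.

End Defs.

(* Main.v *)
Require Import Defs.
From HB Require Import structures.
From mathcomp Require Import all_boot all_order all_algebra.
From mathcomp Require Import reals complex trigo.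
From mathcomp Require Import ring lra.
Import Order.TTheory GRing.Theory Num.Theory.
Local Open Scope ring_scope.


Lemma tr_nilpotent (F : closedFieldType) m (N : 'M[F]_m) k :
  N ^+ k = 0 -> \tr N = 0.
Proof.
case: m N => [|m] N hN; first by rewrite /mxtrace big_ord0.
have roots0 : forall z, root (char_poly N) z -> z = 0.
  move=> z; rewrite -eigenvalue_root_char => /eigenvalueP [v hv vn0].
  have hk : forall j, v *m N ^+ j = z ^+ j *: v.
    elim=> [|j IH]; first by rewrite expr0 scale1r mulmx1.
    by rewrite exprSr -mulmxE mulmxA IH -scalemxAl hv scalerA -exprSr.
  move: (hk k); rewrite hN mulmx0 => /esym/eqP.
  rewrite scaler_eq0 (negbTE vn0) orbF expf_eq0 => /andP[_ /eqP]//.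
have [r hr] := closed_field_poly_normal (char_poly N).
have r0 : all (fun z => z == 0) r.
  apply/allP => z zr; apply/eqP/roots0.
  rewrite hr rootZ; last by rewrite (monicP (char_poly_monic N)) oner_neq0.
  by rewrite root_prod_XsubC.
have hc : char_poly N = 'X ^+ (size r).
  rewrite hr (monicP (char_poly_monic N)) scale1r.
  elim: r r0 {hr} => [|z r IH] /=; first by rewrite big_nil expr0.
  by case/andP=> /eqP -> /IH; rewrite big_cons subr0 exprS => ->.
have := char_poly_trace N (ltn0Sn m).
have hs : size r = m.+1.
  by have := size_char_poly N; rewrite hc size_polyXn => -[].
rewrite hc hs coefXn /= eqn_leq ltnn /=.
rewrite andbF => /esym/eqP; rewrite oppr_eq0 => /eqP //.
Qed.
Lemma expand_minus (V : pzRingType) (x y z w : V) :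
  (x - y) * (z - w) = (x*z + y*w) - (x*w + y*z).
Proof. by rewrite mulrBl !mulrBr opprB opprD addrACA addrC. Qed.

Lemma expand_plus (V : pzRingType) (x y z w : V) :
  (x + y) * (z + w) = (x*z + y*w) + (x*w + y*z).
Proof. by rewrite mulrDl !mulrDr [y * z + _]addrC addrACA. Qed.

Lemma zid (V : zmodType) (X1 Y1 H1 H2 H3 H4 : V) :
  (X1 - H1) + H2 + (H3 + (Y1 - H4)) = X1 + Y1 - (H1 + H4 - (H2 + H3)).
Proof.
rewrite opprB opprD -!addrA; congr (_ + _).
by rewrite (addrCA (-H1) H2) (addrCA (-H1) H3) (addrCA (-H1) Y1) (addrCA H3 Y1) (addrCA H2 Y1).
Qed.

Lemma core (C : numClosedFieldType) m d (a b : 'M[C]_m)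
  (hD : forall j k, (0 < j)%N -> (0 < k)%N -> (j + k <= d)%N ->
          (a ^+ j - b ^+ j) * (a ^+ k - b ^+ k) = 0)
  (hd0 : a ^+ d + b ^+ d = 0) n :
  (0 < n)%N -> (n + n <= d)%N -> \tr (a ^+ n) = 0 /\ \tr (b ^+ n) = 0.
Proof.
move=> n0 nd.
pose S k := a ^+ k + b ^+ k.
have hS : forall k, (0 < k)%N -> (k <= d)%N -> S 1%N ^+ k = S k *+ 2 ^ k.-1.
  elim=> [//|k IH] _ kd.
  case: k IH kd => [|k] IH kd; first by rewrite expr1.
  rewrite exprSr IH //; last exact: ltnW.
  rewrite mulrnAl /= expnS mulrnA; congr (_ *+ _).
  rewrite /S expr1 expand_plus.
  have := hD k.+1 1%N isT isT (eq_ind_r (fun x => is_true (x <= d)%N) kd (addn1 _)); rewrite expr1 expand_minus => /eqP; rewrite subr_eq0 => /eqP <-.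
  by rewrite !expr1 -!exprSr mulr2n.
have Sd : S 1%N ^+ d = 0.
  rewrite hS // ?(leq_trans n0) ?(leq_trans _ nd) ?leq_addl //.
  by rewrite /S hd0 mul0rn.
have trS : \tr (S n) = 0.
  have : \tr (S 1%N ^+ n) = 0.
    apply: (@tr_nilpotent _ _ _ d); rewrite -exprM mulnC exprM Sd.
    by rewrite expr0n; case: n n0 {nd hS}.
  rewrite hS ?(leq_trans _ nd) ?leq_addl // raddfMn => /eqP.
  by rewrite mulrn_eq0 expn_eq0 /= => /eqP.
have trD : \tr (a ^+ n - b ^+ n) = 0.
  by apply: (@tr_nilpotent _ _ _ 2); rewrite expr2 hD.
have h2 : (2 : C) != 0 by rewrite pnatr_eq0.
have ea : a ^+ n *+ 2 = S n + (a ^+ n - b ^+ n).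
  by rewrite /S addrACA (addrN (b ^+ n)) addr0 mulr2n.
have eb : b ^+ n *+ 2 = S n - (a ^+ n - b ^+ n).
  by rewrite /S opprB addrC addrA subrK mulr2n.
split.
  have : \tr (a ^+ n) *+ 2 = 0.
  by rewrite -raddfMn /= ea mxtraceD trS trD addr0.
  by move/eqP; rewrite mulrn_eq0 /= => /eqP.
have : \tr (b ^+ n) *+ 2 = 0.
  by rewrite -raddfMn /= eb mxtraceD raddfN /= trS trD oppr0 addr0.
by move/eqP; rewrite mulrn_eq0 /= => /eqP.
Qed.
Lemma expandE (C : fieldType) m (p q r s : 'M[C]_m) (x y h : C) :
  x^+2 = x - h -> y^+2 = y - h -> x * y = h -> y * x = h ->
  (x *: p + y *: q) * (x *: r + y *: s) =
  x *: (p * r) + y *: (q * s) - h *: ((p - q) * (r - s)).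
Proof.
move=> hx hy hxy hyx.
rewrite expand_minus -!mulmxE mulmxDl !mulmxDr -!scalemxAl -!scalemxAr !scalerA.
rewrite -!expr2 hx hy hxy hyx !scalerBl scalerBr !scalerDr.
exact: zid.
Qed.

Section W.
Local Open Scope complex_scope.
Variable R : realType.
Implicit Types x y : R.

Lemma w_mul d x y :
  omega_pow d x * omega_pow d y = omega_pow d (x + y).
Proof.
rewrite /omega_pow.
have -> : 2 * pi * (x + y) / d%:R = 2 * pi * x / d%:R + 2 * pi * y / d%:R.
  by rewrite mulrDr mulrDl.
by rewrite cosD sinD; simpc; rewrite [sin _ * cos _ + _]addrC.
Qed.

Lemma w0 d : omega_pow d (0:R) = 1.
Proof. by rewrite /omega_pow mulr0 mul0r cos0 sin0. Qed.

Lemma wX d x k : omega_pow d x ^+ k = omega_pow d (x *+ k).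
Proof.
elim: k => [|k IH]; first by rewrite expr0 mulr0n w0.
by rewrite exprS IH w_mul mulrS.
Qed.

Lemma w_conj d x : (omega_pow d x)^* * omega_pow d x = 1.
Proof.
rewrite /omega_pow; simpc. 
by rewrite -!expr2 cos2Dsin2 [sin _ * cos _]mulrC subrr.
Qed.

Definition th d : R[i] := omega_pow d (4%:R^-1).

Lemma acoefE d k : acoef R d k = ((1 - 'i) / 2%:R) * th d ^+ k.
Proof. by rewrite /acoef /th wX mulr_natl. Qed.

Lemma omegaE d k : omega_pow d (k%:R : R) = th d ^+ (4 * k).
Proof. by rewrite /th wX mulrnA -[_ *+ 4]mulr_natl mulfV ?pnatr_eq0. Qed.

Lemma th_d d : (0 < d)%N -> th d ^+ d = 'i.
Proof.
move=> d0; rewrite /th wX -[4%:R^-1 *+ d]mulr_natl /omega_pow.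
have -> : 2 * pi * (d%:R * 4%:R^-1) / d%:R = pi / 2 :> R.
  by field; rewrite pnatr_eq0 -lt0n.
by rewrite cos_pihalf sin_pihalf.
Qed.

Lemma i2 : ('i : R[i]) ^+ 2 = -1.
Proof. by rewrite expr2; simpc. Qed.

Lemma omega_d d l : (0 < d)%N -> omega_pow d (l%:R : R) ^+ d = 1.
Proof.
move=> d0; rewrite omegaE -exprM mulnC exprM th_d // (_ : (4 * l = 2 * (2 * l))%N) ?exprM ?i2 ?mulnA //.
by rewrite expr2 mulN1r opprK expr1n.
Qed.

Lemma sub0_eq (x y : R[i]) : x - y = 0 -> x = y.
Proof. by move/eqP; rewrite subr_eq0 => /eqP. Qed.

Definition uu : R[i] := (1 - 'i) / 2%:R.
Definition uu' : R[i] := (1 + 'i) / 2%:R.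

Lemma uu_conj : uu^* = uu'.
Proof. by rewrite /uu /uu'; simpc. Qed.

Lemma uu'2 : uu' ^+ 2 = uu' - 2%:R^-1.
Proof.
apply: sub0_eq.
have -> : uu' ^+ 2 - (uu' - 2%:R^-1) = ('i ^+ 2 + 1) / 4%:R by rewrite /uu'; field.
by rewrite i2 addNr mul0r.
Qed.

Lemma uu2 : uu ^+ 2 = uu - 2%:R^-1.
Proof.
apply: sub0_eq.
have -> : uu ^+ 2 - (uu - 2%:R^-1) = ('i ^+ 2 + 1) / 4%:R by rewrite /uu; field.
by rewrite i2 addNr mul0r.
Qed.

Lemma uuu' : uu * uu' = 2%:R^-1.
Proof.
apply: sub0_eq.
have -> : uu * uu' - 2%:R^-1 = - ('i ^+ 2 + 1) / 4%:R by rewrite /uu /uu'; field.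
by rewrite i2 addNr oppr0 mul0r.
Qed.

Lemma uu_d : uu' * (- 'i) + uu * 'i = 1.
Proof.
apply: sub0_eq.
have -> : uu' * (- 'i) + uu * 'i - 1 = - ('i ^+ 2 + 1) by rewrite /uu /uu'; field.
by rewrite i2 addNr oppr0.
Qed.

End W.

Section M.
Local Open Scope complex_scope.
Variable R : realType.
Local Notation C := (R[i]).

Lemma adjmx_tC m (B : 'M[C]_m) : adjmx B = (B ^t* )%sesqui.
Proof. by rewrite /adjmx map_trmx. Qed.

Lemma adjmxX m (B : 'M[C]_m) k : adjmx (B ^+ k) = adjmx B ^+ k.
Proof.
elim: k => [|k IH].
  by rewrite !expr0 /adjmx map_mx1 trmx1.
rewrite exprSr /adjmx -mulmxE map_mxM trmx_mul mulmxE exprS.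
by move: IH; rewrite /adjmx => <-.
Qed.

Lemma tr_adjmx m (B : 'M[C]_m) : \tr (adjmx B) = (\tr B)^*%C.
Proof. by rewrite /adjmx mxtrace_tr (trace_map_mx conjc). Qed.

Lemma invmx_adj m (B : 'M[C]_m) : unitary_cmx B -> invmx B = adjmx B.
Proof.
case=> h1 h2; have [Bu _] := mulmx1_unit h1.
by rewrite -[RHS]mul1mx -(mulVmx Bu) -mulmxA h1 mulmx1.
Qed.

Lemma unitary_pow_d d m (B : 'M[C]_m) : (0 < d)%N ->
  unitary_cmx B -> spectrum_in_roots d B -> B ^+ d = 1.
Proof.
move=> d0 hU hS.
have hN : B \is normalmx.
  by apply/normalmxP; rewrite -!adjmx_tC; case: hU => -> ->.
move/orthomx_spectralP: hN.
set P := spectralmx B; set s := spectral_diag B => hB.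
have Pu : P \in unitmx by apply: spectral_unit.
have hs : forall j, s 0 j ^+ d = 1.
  move=> j.
  have : eigenvalue B (s 0 j).
    apply/eigenvalueP; exists (delta_mx 0 j *m P).
      rewrite {1}hB !mulmxA mulmxK // -[_ *m diag_mx s]rowE row_diag_mx.
      by rewrite -scalemxAl.
    apply/negP => /eqP h0.
    have := congr1 (mulmx^~ (invmx P)) h0; rewrite /= mul0mx mulmxK //.
    move=> /matrixP /(_ 0 j); rewrite !mxE !eqxx /=.
    by move/eqP; rewrite oner_eq0.
  by move/hS => [l [_ ->]]; apply: omega_d.
have hk : forall k, B ^+ k = invmx P *m diag_mx (\row_j (s 0 j ^+ k)) *m P.
  elim => [|k IH].
    rewrite expr0 (_ : \row_j _ = const_mx 1); last by apply/rowP => j; rewrite !mxE.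
    by rewrite diag_const_mx mulmx1 mulVmx.
  rewrite exprSr IH {1}hB -mulmxE -!mulmxA mulKVmx // [diag_mx _ *m (_ *m P)]mulmxA mulmx_diag.
  by congr (_ *m (diag_mx _ *m _)); apply/rowP => j; rewrite !mxE exprSr.
rewrite hk (_ : \row_j _ = const_mx 1); last by apply/rowP => j; rewrite !mxE hs.
by rewrite diag_const_mx mulmx1 mulVmx.
Qed.
End M.

Section Main.
Variable R : realType.
Local Open Scope complex_scope.

Lemma conj_i : ('i : R[i])^* = - 'i.
Proof. by simpc. Qed.

Lemma adjmx1 m : adjmx (1%:M : 'M[R[i]]_m) = 1%:M.
Proof. by rewrite /adjmx map_mx1 trmx1. Qed.

End Main.


Lemma acoef_conj (R : realType) d k : Num.conj (acoef R d k) = uu' R * (Num.conj (th R d)) ^+ k.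
Proof.
rewrite acoefE (rmorphM Num.conj) (rmorphXn Num.conj).
congr (_ * _); first exact: uu_conj.
Qed.

Lemma acoef_uu (R : realType) d k : acoef R d k = uu R * th R d ^+ k.
Proof. exact: acoefE. Qed.

Lemma scalemxXn (C : comNzRingType) m (c : C) (A : 'M[C]_m) k :
  (c *: A) ^+ k = c ^+ k *: A ^+ k.
Proof.
elim: k => [|k IH]; first by rewrite !expr0 scale1r.
by rewrite !exprS IH -!mulmxE -scalemxAl -scalemxAr scalerA.
Qed.

Theorem lemma1 (R : realType) (d m : nat) (hd : (2 <= d)%N)
  (B1 B2 : 'M[R[i]]_m)
  (hU1 : unitary_cmx B1) (hU2 : unitary_cmx B2)
  (hS1 : spectrum_in_roots d B1) (hS2 : spectrum_in_roots d B2)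
  (hC1pow : forall k : nat, (1 <= k <= d - 1)%N ->
     Cop1 d k B1 B2 = (Cop1 d 1 B1 B2) ^+ k)
  (hC2pow : forall k : nat, (1 <= k <= d - 1)%N ->
     Cop2 d k B1 B2 = (Cop2 d 1 B1 B2) ^+ k)
  (hC1inv : forall k : nat, (1 <= k <= d - 1)%N ->
     Cop1 d (d - k) B1 B2 *m Cop1 d k B1 B2 = 1%:M)
  (hC2inv : forall k : nat, (1 <= k <= d - 1)%N ->
     Cop2 d (d - k) B1 B2 *m Cop2 d k B1 B2 = 1%:M) :
  forall n : nat, (0 < n < d)%N -> (n %| d)%N ->
    \tr (B1 ^+ n) = 0 /\ \tr (B2 ^+ n) = 0.
Proof.
move=> n /andP[n0 nd] ndvd.
have d0 : (0 < d)%N by apply: leq_trans hd.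
set X := invmx B1; set Y := invmx B2.
have hX : X = adjmx B1 by apply: invmx_adj.
have hY : Y = adjmx B2 by apply: invmx_adj.
have Xd : X ^+ d = 1 by rewrite hX -adjmxX unitary_pow_d // adjmx1.
have Yd : Y ^+ d = 1 by rewrite hY -adjmxX unitary_pow_d // adjmx1.
set t := th R d.
have tt : Num.conj t * t = 1 by apply: w_conj.
set a := Num.conj t *: X; set b := t *: Y.
pose E l := uu' R *: a ^+ l + uu R *: b ^+ l.
have hCop : forall k, Cop2 d k B1 B2 = E k.
  move=> k; rewrite /Cop2 acoef_conj acoef_uu /E /a /b !scalemxXn !scalerA.
  reflexivity.
have tdi : t ^+ d = 'i by apply: th_d.
have ctd : Num.conj t ^+ d = - 'i.
  by rewrite -(rmorphXn Num.conj) tdi; exact: conj_i.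
have hd0 : a ^+ d + b ^+ d = 0.
  by rewrite /a /b !scalemxXn Xd Yd ctd tdi -scalerDl addNr scale0r.
have Ed : E d = 1.
  rewrite /E /a /b !scalemxXn Xd Yd ctd tdi !scalerA -scalerDl.
  have -> : uu' R * - 'i + uu R * 'i = 1 by exact: uu_d.
  exact: scale1r.
have hexp : forall j k, E j * E k = E (j + k)%N - 2%:R^-1 *: ((a ^+ j - b ^+ j) * (a ^+ k - b ^+ k)).
  move=> j k; rewrite /E (@expandE _ _ _ _ _ _ _ _ 2%:R^-1) ?exprD //.
  - exact: uu'2.
  - exact: uu2.
  - rewrite mulrC; exact: uuu'.
  - exact: uuu'.
have hD : forall j k, (0 < j)%N -> (0 < k)%N -> (j + k <= d)%N ->
          (a ^+ j - b ^+ j) * (a ^+ k - b ^+ k) = 0.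
  move=> j k j0 k0 jkd.
  have hE : E j * E k = E (j + k)%N.
    rewrite -!hCop.
    have r1 : forall l, (0 < l)%N -> (l < d)%N -> (1 <= l <= d - 1)%N.
      by move=> l l0 ld; rewrite l0 /= leq_subRL ?add1n // ltnW.
    case: (ltngtP (j + k) d) jkd => // [jkd' _|jkd' _].
      rewrite (hC2pow j) ?r1 ?(leq_ltn_trans _ jkd') ?leq_addr //.
      rewrite (hC2pow k) ?r1 ?(leq_ltn_trans _ jkd') ?leq_addl //.
      by rewrite (hC2pow (j + k)) ?r1 ?addn_gt0 ?j0 // exprD.
    have ej : j = (d - k)%N by rewrite -jkd' addnK.
    rewrite jkd' ej -mulmxE hC2inv; first by rewrite hCop Ed.
    apply: r1 => //; rewrite -jkd' -[k]add0n ltn_add2r //.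
  have := hexp j k; rewrite hE -{1}[E (j + k)%N]subr0 => /addrI/oppr_inj/esym/eqP.
  by rewrite scaler_eq0 invr_eq0 pnatr_eq0 /= => /eqP.
have [q dq] : exists q, d = (q * n)%N by exists (d %/ n)%N; rewrite divnK.
have nn : (n + n <= d)%N.
  rewrite dq addnn -mul2n leq_pmul2r //.
  case: q dq => [|[|q]] dq //; first by rewrite dq mul0n in d0.
  by rewrite dq mul1n ltnn in nd.
have [ta tb] := core _ _ _ _ _ hD hd0 n n0 nn.
have tX : \tr (X ^+ n) = 0.
  move: ta; rewrite /a scalemxXn mxtraceZ => /eqP; rewrite mulf_eq0 expf_eq0.
  have : Num.conj t != 0.
    by apply/negP => /eqP h0; move: tt; rewrite h0 mul0r => /eqP; rewrite eq_sym oner_eq0.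
  by move=> /negbTE ->; rewrite andbF /= => /eqP.
have tY : \tr (Y ^+ n) = 0.
  move: tb; rewrite /b scalemxXn mxtraceZ => /eqP; rewrite mulf_eq0 expf_eq0.
  have : t != 0.
    by apply/negP => /eqP h0; move: tt; rewrite h0 mulr0 => /eqP; rewrite eq_sym oner_eq0.
  by move=> /negbTE ->; rewrite andbF /= => /eqP.
split.
  move: tX; rewrite hX -adjmxX tr_adjmx => /eqP; rewrite conjc_eq0 => /eqP //.
move: tY; rewrite hY -adjmxX tr_adjmx => /eqP; rewrite conjc_eq0 => /eqP //.
Qed.
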